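(* Let $\mathcal H$ be a Berge-$C_4$-free hypergraph (multi-hyperedges allowed), and let $H$ be a colored graph on the vertex set of $\mathcal H$ obtained as follows: for each hyperedge $h\in\mathcal H$ with $|h|\ge 4$, one places $|h|-3$ edges on vertices of $h$ such that the set of edges placed in $h$ forms a collection of pairwise vertex-disjoint triangles and single edges, and each edge placed in $h$ receives color $h$ (each edge of $H$ has exactly one color). Let $v$ be any vertex of $H$, let $d(v)$ be its degree in $H$, let $N_1(v)=\{x : vx\in E(H)\}$ and $N_2(v)=\{y\notin N_1(v)\cup\{v\} : \exists x\in N_1(v) \text{ with } xy\in E(H)\}$. Let $G=H[N_1(v)]$ be the subgraph of $H$ induced by $N_1(v)$. Let $G_{aux}$ be the graph on vertex set $N_1(v)$ in which $x\neq y$ are adjacent if and only if there exists $w\in N_2(v)$ with $wx,wy\in E(H)$, and let $G'_{aux}$ be the graph on $N_1(v)$ whose edge set is $E(G_{aux})\setminus E(G)$. Then the number of edges of $G'_{aux}$ satisfies $$|E(G'_{aux})| < d(v)^{9/5}.$$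
   Context: A Berge cycle of length $k$ in a hypergraph is an alternating sequence $v_1,h_1,\ldots,v_k,h_k$ of distinct vertices and distinct hyperedges with $v_i,v_{i+1}\in h_i$ for $1\le i\le k-1$ and $v_k,v_1\in h_k$; Berge-$C_4$-free means no such sequence with $k=4$ exists. In $H$, an edge $xy$ ''has color $h$'' if it was placed inside hyperedge $h$. $xy$ denotes the pair $\{x,y\}$. *)

(* Defs.v *)
From HB Require Import structures.
From mathcomp Require Import all_boot all_order all_algebra.
From mathcomp Require Import reals exp.
Set Implicit Arguments. Unset Strict Implicit. Unset Printing Implicit Defensive.

Section Defs.
Variables (V E : finType).

(* A hypergraph on V with hyperedges indexed by E (multi-hyperedges allowed:
   distinct indices may carry the same vertex set). *)

Definition berge_C4_free (hE : E -> {set V}) : Prop :=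
  forall (v1 v2 v3 v4 : V) (h1 h2 h3 h4 : E),
    uniq [:: v1; v2; v3; v4] -> uniq [:: h1; h2; h3; h4] ->
    ~ [/\ v1 \in hE h1 /\ v2 \in hE h1, v2 \in hE h2 /\ v3 \in hE h2,
          v3 \in hE h3 /\ v4 \in hE h3 & v4 \in hE h4 /\ v1 \in hE h4].

(* P h = the set of edges (2-element vertex sets) placed inside hyperedge h,
   i.e. the edges of color h. *)
Definition valid_placement (hE : E -> {set V}) (P : E -> {set {set V}}) : Prop :=
  [/\ forall h, (4 <= #|hE h| -> #|P h| = #|hE h| - 3) /\
                (#|hE h| < 4 -> P h = set0),
      forall h, exists S : {set {set V}},
        [/\ forall s, s \in S -> s \subset hE h /\ (#|s| = 2 \/ #|s| = 3),
            forall s t, s \in S -> t \in S -> s != t -> [disjoint s & t] &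
            P h = [set e : {set V} | (#|e| == 2) && [exists s in S, e \subset s]]]
    & forall h1 h2 e, e \in P h1 -> e \in P h2 -> h1 = h2].

Definition Hedges (P : E -> {set {set V}}) : {set {set V}} := \bigcup_(h : E) P h.

Variable EH : {set {set V}}.

Definition N1 (v : V) : {set V} := [set x | [set v; x] \in EH].

Definition N2 (v : V) : {set V} :=
  [set y | (y \notin N1 v) && (y != v) && [exists x in N1 v, [set x; y] \in EH]].

Definition G_edges (v : V) : {set {set V}} :=
  [set e in EH | e \subset N1 v].

Definition Gaux_edges (v : V) : {set {set V}} :=
  [set [set x; y] | x in N1 v, y in N1 v &
     (x != y) && [exists w in N2 v, ([set w; x] \in EH) && ([set w; y] \in EH)]].

Definition Gaux'_edges (v : V) : {set {set V}} := Gaux_edges v :\: G_edges v.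

End Defs.

(* Main.v *)
Require Import Defs.
From HB Require Import structures.
From mathcomp Require Import all_boot all_order all_algebra.
From mathcomp Require Import reals exp.
From mathcomp Require Import ring lra zify.
Import Order.TTheory GRing.Theory Num.Theory.
Set Implicit Arguments. Unset Strict Implicit. Unset Printing Implicit Defensive.


Lemma small_bound (d : nat) : 1 <= d <= 36 -> (d - 1) ^ 5 < 32 * d ^ 4.
Proof.
case/andP=> d1 d36.
have [e de] : exists e, d = e.+1 by exists d.-1; lia.
have -> : d - 1 = e by lia.
have he : 36 * e <= 35 * d by lia.
have h4 : (36 * e) ^ 4 <= (35 * d) ^ 4 by rewrite leq_exp2r.
rewrite !expnMn in h4.
have e35 : e <= 35 by lia.
have h5 : e ^ 5 <= 35 * e ^ 4 by rewrite expnS leq_mul2r e35 orbT.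
have hd : 0 < d ^ 4 by rewrite expn_gt0 d1.
move: h4 h5 hd.
move: (e ^ 5) (e ^ 4) (d ^ 4) => E5 E4 D4 h4 h5 hd.
nia.
Qed.

Lemma large_bound (J d : nat) : 37 <= d -> J * J <= d * (2 * J + 2 * (d * (d - 1))) ->
  J * J < 3 * d ^ 3.
Proof.
move=> d37 H.
rewrite ltnNge; apply/negP => C.
have H1 : J * J <= 2 * d * J + 2 * d ^ 3 by move: H; rewrite (expnS d 2) expnS expn1; nia.
have H2 : d ^ 3 <= 2 * d * J by rewrite (expnS d 2) expnS expn1 in H1 C *; nia.
have H3 : d * d <= 2 * J by rewrite (expnS d 2) expnS expn1 in H2; nia.
have H4 : J <= 6 * d by rewrite (expnS d 2) expnS expn1 in H1; nia.
nia.
Qed.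

Lemma arith (g J d : nat) : 1 <= d -> g <= J -> 2 * g <= d * (d - 1) ->
  J * J <= d * (2 * J + 2 * (d * (d - 1))) -> g ^ 5 < d ^ 9.
Proof.
move=> d1 gJ gd H.
case: (leqP d 36) => d36.
  have sb : (d - 1) ^ 5 < 32 * d ^ 4 by apply: small_bound; rewrite d1 d36.
  have h1 : (2 * g) ^ 5 <= (d * (d - 1)) ^ 5 by rewrite leq_exp2r.
  rewrite !expnMn in h1.
  have -> : d ^ 9 = d ^ 5 * d ^ 4 by rewrite -expnD.
  have hd : 0 < d ^ 5 by rewrite expn_gt0 d1.
  move: h1 sb hd; move: (g ^ 5) ((d - 1) ^ 5) (d ^ 4) (d ^ 5) => A B C D.
  rewrite (_ : 2 ^ 5 = 32) //; nia.
have lb := @large_bound J d d36 H.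
have h2 : g * g < 3 * d ^ 3 by apply: leq_ltn_trans lb; apply: leq_mul.
have h3 : (g * g) ^ 5 < (3 * d ^ 3) ^ 5 by rewrite ltn_exp2r.
rewrite [(3 * _) ^ 5]expnMn -expnM in h3.
have h4 : 3 ^ 5 <= d ^ 3.
  apply: leq_trans (_ : 37 ^ 3 <= _); first by lia.
  by rewrite leq_exp2r.
have h5 : (g * g) ^ 5 < d ^ 18.
  apply: leq_trans h3 _.
  have -> : d ^ 18 = d ^ 3 * d ^ (3 * 5) by rewrite -expnD.
  by rewrite leq_mul2r h4 orbT.
rewrite ltnNge; apply/negP => C.
have : d ^ 9 * d ^ 9 <= g ^ 5 * g ^ 5 by apply: leq_mul.
rewrite -!expnD; rewrite expnMn -expnD in h5.
by rewrite leqNgt h5.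
Qed.

Lemma nat_CS (T : finType) (A : {set T}) (K : T -> nat) :
  (\sum_(y in A) K y) * (\sum_(y in A) K y) <= #|A| * \sum_(y in A) K y ^ 2.
Proof.
rewrite -(leq_pmul2l (isT : 0 < 2)).
rewrite big_distrl /=.
have -> : \sum_(i in A) K i * (\sum_(y in A) K y) = \sum_(i in A) \sum_(z in A) K i * K z.
  by apply: eq_bigr => i _; rewrite big_distrr.
rewrite big_distrr /=.
apply: leq_trans (_ : \sum_(i in A) \sum_(z in A) (K i ^ 2 + K z ^ 2) <= _).
  apply: leq_sum => i _; rewrite big_distrr /=; apply: leq_sum => z _.
  exact: (nat_Cauchy _ _).1.
rewrite (eq_bigr (fun i => #|A| * K i ^ 2 + \sum_(z in A) K z ^ 2)); last first.
  by move=> i _; rewrite big_split /= sum_nat_const.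
rewrite big_split /= sum_nat_const -big_distrr /=.
lia.
Qed.

Lemma P_card2 (V E : finType) (hE : E -> {set V}) (P : E -> {set {set V}}) h e :
  valid_placement hE P -> e \in P h -> #|e| = 2 /\ e \subset hE h.
Proof.
case=> _ hS _; case: (hS h) => S [hs _ ->].
rewrite inE => /andP[/eqP c2 /existsP[s /andP[sS es]]].
split=> //; apply: subset_trans es _; exact: (hs s sS).1.
Qed.

Lemma P_piece (V E : finType) (hE : E -> {set V}) (P : E -> {set {set V}}) h
    (a b c : V) : valid_placement hE P ->
  [set a; b] \in P h -> [set a; c] \in P h ->
  exists s : {set V}, [/\ a \in s, b \in s, c \in s & #|s| <= 3].
Proof.
case=> _ hS _; case: (hS h) => S [hs hd ->].
rewrite !inE => /andP[_ /existsP[s1 /andP[s1S e1]]] /andP[_ /existsP[s2 /andP[s2S e2]]].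
have a1 : a \in s1 by apply: (subsetP e1); rewrite !inE eqxx.
have a2 : a \in s2 by apply: (subsetP e2); rewrite !inE eqxx.
have s12 : s1 = s2.
  apply/eqP; apply/negPn/negP => ne.
  by move: (hd _ _ s1S s2S ne) => /disjointFr /(_ a1); rewrite a2.
subst s2; exists s1; split=> //.
- by apply: (subsetP e1); rewrite !inE eqxx orbT.
- by apply: (subsetP e2); rewrite !inE eqxx orbT.
- by case: (hs s1 s1S) => _ [] ->.
Qed.

Lemma P_tri (V E : finType) (hE : E -> {set V}) (P : E -> {set {set V}}) h
    (a b c : V) : valid_placement hE P ->
  [set a; b] \in P h -> [set a; c] \in P h -> b != c -> [set b; c] \in P h.
Proof.
move=> hv.
have hv' := hv; case: hv' => _ hS _; case: (hS h) => S [hs hd EP].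
move=> e1 e2 bc.
rewrite EP !inE cards2 bc /=.
move: e1 e2; rewrite EP !inE => /andP[_ /existsP[s1 /andP[s1S e1]]] /andP[_ /existsP[s2 /andP[s2S e2]]].
have a1 : a \in s1 by apply: (subsetP e1); rewrite !inE eqxx.
have a2 : a \in s2 by apply: (subsetP e2); rewrite !inE eqxx.
have s12 : s1 = s2.
  apply/eqP; apply/negPn/negP => ne.
  by move: (hd _ _ s1S s2S ne) => /disjointFr /(_ a1); rewrite a2.
subst s2; apply/existsP; exists s1; rewrite s1S /=.
apply/subsetP => z; rewrite !inE => /orP[] /eqP ->.
- by apply: (subsetP e1); rewrite !inE eqxx orbT.
- by apply: (subsetP e2); rewrite !inE eqxx orbT.
Qed.

Lemma P_no4 (V E : finType) (hE : E -> {set V}) (P : E -> {set {set V}}) h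
    (a b c e : V) : valid_placement hE P ->
  [set a; b] \in P h -> [set a; c] \in P h -> [set a; e] \in P h ->
  uniq [:: a; b; c; e] -> False.
Proof.
move=> hv e1 e2 e3 u.
have hv' := hv; case: hv' => _ hS _; case: (hS h) => S [hs hd EP].
move: e1 e2 e3; rewrite EP !inE => /andP[_ /existsP[s1 /andP[s1S f1]]] /andP[_ /existsP[s2 /andP[s2S f2]]] /andP[_ /existsP[s3 /andP[s3S f3]]].
have a1 : a \in s1 by apply: (subsetP f1); rewrite !inE eqxx.
have a2 : a \in s2 by apply: (subsetP f2); rewrite !inE eqxx.
have a3 : a \in s3 by apply: (subsetP f3); rewrite !inE eqxx.
have same : forall s t, s \in S -> t \in S -> a \in s -> a \in t -> s = t.
  move=> s t sS tS as_ at_; apply/eqP; apply/negPn/negP => ne.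
  by move: (hd _ _ sS tS ne) => /disjointFr /(_ as_); rewrite at_.
have E12 := same _ _ s1S s2S a1 a2; have E13 := same _ _ s1S s3S a1 a3.
subst s2 s3.
have sub : {subset [:: a; b; c; e] <= s1}.
  move=> z; rewrite !inE => /or4P[] /eqP ->.
  - by [].
  - by apply: (subsetP f1); rewrite !inE eqxx orbT.
  - by apply: (subsetP f2); rewrite !inE eqxx orbT.
  - by apply: (subsetP f3); rewrite !inE eqxx orbT.
have le : 4 <= #|s1|.
  move/card_uniqP: u => /= u; rewrite -u.
  by apply: subset_leq_card; apply/subsetP.
have := (hs s1 s1S).2 => c3.
by case: c3 => E3; rewrite E3 in le.
Qed.

Definition Rel (V E : finType) (hE : E -> {set V}) (P : E -> {set {set V}}) (v x y : V) : bool :=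
  [exists h, [&& [set v; x] \in P h, y \in hE h & [set v; y] \notin P h]].

Lemma P_neq (V E : finType) (hE : E -> {set V}) (P : E -> {set {set V}}) h (a b : V) :
  valid_placement hE P -> [set a; b] \in P h -> a != b.
Proof.
move=> hv /(P_card2 hv) [c _]; move: c; rewrite cards2.
by case: (a != b).
Qed.

Lemma P_mem (V E : finType) (hE : E -> {set V}) (P : E -> {set {set V}}) h (a b : V) :
  valid_placement hE P -> [set a; b] \in P h -> a \in hE h /\ b \in hE h.
Proof.
move=> hv /(P_card2 hv) [_ /subsetP s]; split; apply: s; by rewrite !inE eqxx ?orbT.
Qed.

Lemma EH_col (V E : finType) (P : E -> {set {set V}}) e :
  e \in Hedges P -> exists h, e \in P h.
Proof. by move=> /bigcupP[h _ eh]; exists h. Qed.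

Lemma col_EH (V E : finType) (P : E -> {set {set V}}) e h :
  e \in P h -> e \in Hedges P.
Proof. by move=> eh; apply/bigcupP; exists h. Qed.

Lemma claimA (V E : finType) (hE : E -> {set V}) (P : E -> {set {set V}}) (v : V) e :
  berge_C4_free hE -> valid_placement hE P ->
  e \in Gaux'_edges (Hedges P) v ->
  exists x y, [/\ e = [set x; y], x \in N1 (Hedges P) v, y \in N1 (Hedges P) v &
     Rel hE P v x y].
Proof.
move=> hC4 hv.
have uc := hv; case: uc => _ _ uc.
rewrite /Gaux'_edges inE => /andP[nG /imset2P[x y xN]].
rewrite inE => /andP[yN /andP[xy /existsP[w /andP[wN2 /andP[wx wy]]]]] Ee; subst e.
have nxy : [set x; y] \notin Hedges P.
  apply: contra nG => H; rewrite /G_edges inE H /=.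
  by apply/subsetP => z /set2P[] ->.
move: wN2; rewrite /N2 inE => /andP[/andP[wN wv] _].
have wx' : w != x by apply: contraNneq wN => ->.
have wy' : w != y by apply: contraNneq wN => ->.
have xN' := xN; have yN' := yN.
move: xN' yN'; rewrite /N1 !inE => /EH_col[a ha] /EH_col[a' ha'].
case/EH_col: wx => b hb; case/EH_col: wy => b' hb'.
have vx := P_neq hv ha; have vy := P_neq hv ha'.
have aa' : a != a'.
  apply/eqP => E1; subst a'; apply: (negP nxy); apply: (col_EH (h := a)).
  exact: P_tri hv ha ha' xy.
have bb' : b != b'.
  apply/eqP => E1; subst b'; apply: (negP nxy); apply: (col_EH (h := b)).
  exact: P_tri hv hb hb' xy.
have ab : a != b.
  apply/eqP => E1; subst b.
  have h1 : [set x; v] \in P a by rewrite setUC.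
  have h2 : [set x; w] \in P a by rewrite setUC.
  have := P_tri hv h1 h2; rewrite eq_sym wv => /(_ isT) hvw.
  by move: wN; rewrite /N1 inE (col_EH hvw).
have ab' : a' != b'.
  apply/eqP => E1; subst b'.
  have h1 : [set y; v] \in P a' by rewrite setUC.
  have h2 : [set y; w] \in P a' by rewrite setUC.
  have := P_tri hv h1 h2; rewrite eq_sym wv => /(_ isT) hvw.
  by move: wN; rewrite /N1 inE (col_EH hvw).
have [vxa xa] := P_mem hv ha; have [vya ya] := P_mem hv ha'.
have [wb xb] := P_mem hv hb; have [wb' yb'] := P_mem hv hb'.
case: (eqVneq a b') => [E1 | ab2].
  subst b'; exists x, y; split=> //.
  apply/existsP; exists a; rewrite ha yb' /=.
  by apply/negP => H; move: aa'; rewrite (uc _ _ _ H ha') eqxx.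
case: (eqVneq b a') => [E1 | ba2].
  subst a'; exists y, x; split=> //; first by rewrite setUC.
  apply/existsP; exists b; rewrite ha' xb /=.
  by apply/negP => H; move: aa'; rewrite (uc _ _ _ H ha) eqxx.
exfalso; apply: (hC4 v x w y a b b' a').
- rewrite /= !inE !negb_or vx (eq_sym v w) wv vy (eq_sym x w) wx' xy /=.
  by rewrite wy'.
  rewrite /= !inE !negb_or ab ab2 aa' bb' ba2 (eq_sym b' a') ab' /=.
  done.
- by split.
Qed.

Lemma cyc4 (V E : finType) (hE : E -> {set V}) (P : E -> {set {set V}}) (v yi yj yk : V)
   (ai aj h h' : E) :
  berge_C4_free hE -> valid_placement hE P ->
  uniq [:: v; yi; yk; yj] -> ai != aj -> [set v; yi] \in P ai -> [set v; yj] \in P aj ->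
  ai != h -> ai != h' -> aj != h -> aj != h' -> h != h' ->
  yi \in hE h -> yk \in hE h -> yk \in hE h' -> yj \in hE h' -> False.
Proof.
move=> hC4 hv u aij hi hj aih aih' ajh ajh' hh' yih ykh ykh' yjh'.
have [vi yi'] := P_mem hv hi; have [vj yj'] := P_mem hv hj.
apply: (hC4 v yi yk yj ai h h' aj u) => //.
rewrite /= !inE !negb_or aih aih' aij hh' /= (eq_sym h aj) ajh (eq_sym h' aj) ajh'.
done.
Qed.

Lemma claimB (V E : finType) (hE : E -> {set V}) (P : E -> {set {set V}}) (v x x' : V) :
  berge_C4_free hE -> valid_placement hE P ->
  x \in N1 (Hedges P) v -> x' \in N1 (Hedges P) v ->
  ~~ [exists h, ([set v; x] \in P h) && ([set v; x'] \in P h)] ->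
  #|[set y in N1 (Hedges P) v | Rel hE P v x y && Rel hE P v x' y]| <= 2.
Proof.
move=> hC4 hv xN x'N nsame.
have uc := hv; case: uc => _ _ uc.
move: xN x'N; rewrite /N1 !inE => /EH_col[h hx] /EH_col[h' hx'].
have hh' : h != h'.
  apply/eqP => E1; subst h'; move/negP: nsame; apply; apply/existsP; exists h.
  by rewrite hx hx'.
have info : forall y, y \in [set y in N1 (Hedges P) v | Rel hE P v x y && Rel hE P v x' y] ->
    exists a, [/\ [set v; y] \in P a, a != h, a != h', y \in hE h & y \in hE h'] /\ v != y.
  move=> y; rewrite !inE => /andP[/EH_col[a ha] /andP[/existsP[g /and3P[g1 g2 g3]]
                                        /existsP[g' /and3P[g1' g2' g3']]]].
  have eg := uc _ _ _ g1 hx; have eg' := uc _ _ _ g1' hx'; subst g g'.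
  exists a; split; last exact: P_neq hv ha.
  split=> //.
  - by apply/eqP => E1; subst a; rewrite ha in g3.
  - by apply/eqP => E1; subst a; rewrite ha in g3'.
rewrite leqNgt; apply/negP => /card_gt2P[y1 [y2 [y3 [[i1 i2 i3] [n12 n23 n31]]]]].
case: (info _ i1) => a1 [[p1 a1h a1h' y1h y1h'] v1].
case: (info _ i2) => a2 [[p2 a2h a2h' y2h y2h'] v2].
case: (info _ i3) => a3 [[p3 a3h a3h' y3h y3h'] v3].
case: (eqVneq a1 a3) => [E13 | n13].
  subst a3; case: (eqVneq a1 a2) => [E12 | n12'].
    subst a2; apply: (P_no4 hv p1 p2 p3).
    by rewrite /= !inE !negb_or v1 v2 v3 n12 /= eq_sym n31 n23.
  apply: (cyc4 hC4 hv (yi := y1) (yj := y2) (yk := y3) _ n12' p1 p2 a1h a1h' a2h a2h' hh'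
    y1h y3h y3h' y2h') => //.
  by rewrite /= !inE !negb_or v1 v3 v2 /= eq_sym n31 n12 /= eq_sym n23.
apply: (cyc4 hC4 hv (yi := y1) (yj := y3) (yk := y2) _ n13 p1 p3 a1h a1h' a3h a3h' hh'
    y1h y2h y2h' y3h') => //.
by rewrite /= !inE !negb_or v1 v2 v3 /= n12 /= eq_sym n31 n23.
Qed.

Lemma sum_bool_card (T : finType) (p : pred T) :
  \sum_(y : T) (p y : nat) = #|[set y | p y]|.
Proof.
rewrite -sum1_card [RHS]big_mkcond /=; apply: eq_bigr => y _.
by rewrite inE; case: (p y).
Qed.

Lemma claimC (V E : finType) (hE : E -> {set V}) (P : E -> {set {set V}}) (v x : V) :
  valid_placement hE P -> x \in N1 (Hedges P) v ->
  #|[set x' in N1 (Hedges P) v | (x' != x) &&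
      [exists h, ([set v; x] \in P h) && ([set v; x'] \in P h)]]| <= 1.
Proof.
move=> hv xN; have uc := hv; case: uc => _ _ uc.
apply/card_le1_eqP => y z; rewrite !inE => /andP[yN /andP[yx /existsP[h /andP[h1 h2]]]]
   /andP[zN /andP[zx /existsP[g /andP[g1 g2]]]].
have E1 := uc _ _ _ g1 h1; subst g.
apply/eqP; apply/negPn/negP => yz.
apply: (P_no4 hv h1 h2 g2).
rewrite /= !inE !negb_or (P_neq hv h1) (P_neq hv h2) (P_neq hv g2) /=.
by rewrite eq_sym yx eq_sym zx eq_sym yz.
Qed.

Definition rb (V E : finType) (hE : E -> {set V}) (P : E -> {set {set V}}) (v x y : V) : bool :=
  [&& x \in N1 (Hedges P) v, y \in N1 (Hedges P) v & Rel hE P v x y].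

Lemma count1 (V E : finType) (hE : E -> {set V}) (P : E -> {set {set V}}) (v : V) :
  berge_C4_free hE -> valid_placement hE P ->
  #|Gaux'_edges (Hedges P) v| <= \sum_(y : V) \sum_(x : V) (rb hE P v x y : nat).
Proof.
move=> hC4 hv.
have sub : Gaux'_edges (Hedges P) v \subset
   [set [set p.1; p.2] | p in [set p : V * V | rb hE P v p.1 p.2]].
  apply/subsetP => e /(claimA hC4 hv) [x [y [-> xN yN R]]].
  apply/imsetP; exists (x, y) => //; by rewrite inE /rb xN yN R.
apply: leq_trans (subset_leq_card sub) _; apply: leq_trans (leq_imset_card _ _) _.
rewrite -(sum_bool_card (fun p : V * V => rb hE P v p.1 p.2)).
by rewrite exchange_big pair_bigA.
Qed.

Lemma count2 (V E : finType) (hE : E -> {set V}) (P : E -> {set {set V}}) (v : V) :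
  2 * #|Gaux'_edges (Hedges P) v| <= #|N1 (Hedges P) v| * (#|N1 (Hedges P) v| - 1).
Proof.
have sub : Gaux'_edges (Hedges P) v \subset
   [set A : {set V} | A \subset N1 (Hedges P) v & #|A| == 2].
  apply/subsetP => e; rewrite /Gaux'_edges inE => /andP[_ /imset2P[x y xN]].
  rewrite inE => /andP[yN /andP[xy _]] ->.
  rewrite inE cards2 xy andbT.
  by apply/subsetP => z /set2P[] ->.
have := subset_leq_card sub; rewrite cards_draws bin2 => H.
apply: leq_trans (_ : ((#|N1 (Hedges P) v| * #|N1 (Hedges P) v|.-1)./2).*2 <= _).
  by rewrite mul2n leq_double.
rewrite halfK; lia.
Qed.

Lemma count3 (V E : finType) (hE : E -> {set V}) (P : E -> {set {set V}}) (v : V) :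
  berge_C4_free hE -> valid_placement hE P ->
  \sum_(y : V) (\sum_(x : V) (rb hE P v x y : nat)) ^ 2 <=
  2 * (\sum_(y : V) \sum_(x : V) (rb hE P v x y : nat)) +
  2 * (#|N1 (Hedges P) v| * (#|N1 (Hedges P) v| - 1)).
Proof.
move=> hC4 hv.
set N := N1 (Hedges P) v.
set r := fun x y => (rb hE P v x y : nat).
set d := #|N|.
have step1 : \sum_(y : V) (\sum_(x : V) r x y) ^ 2 =
   \sum_(x : V) \sum_(x' : V) \sum_(y : V) r x y * r x' y.
  rewrite (eq_bigr (fun y => \sum_x \sum_x' r x y * r x' y)); last first.
    move=> y _; rewrite expnS expn1 big_distrl /=; apply: eq_bigr => x _.
    by rewrite big_distrr.
  rewrite exchange_big /=; apply: eq_bigr => x _; by rewrite exchange_big.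
rewrite step1.
set K' := fun x => \sum_(y : V) r x y.
have rN : forall x y, x \notin N -> r x y = 0.
  by move=> x y xN; rewrite /r /rb (negbTE xN).
have rN' : forall x y, y \notin N -> r x y = 0.
  by move=> x y yN; rewrite /r /rb (negbTE yN) andbF.
have step3 : forall x, \sum_(x' : V) \sum_(y : V) r x y * r x' y <=
    (x \in N) * (2 * K' x + 2 * (d - 1)).
  move=> x; case: (boolP (x \in N)) => xN; last first.
    rewrite mul0n leqn0; apply/eqP; apply: big1 => x' _; apply: big1 => y _.
    by rewrite rN.
  rewrite mul1n (bigD1 x) //=.
  have Mxx : \sum_(y : V) r x y * r x y = K' x.
    by apply: eq_bigr => y _; rewrite /r; case: (rb _ _ _ _ _).
  rewrite Mxx.
  set same := fun x' => [exists h, ([set v; x] \in P h) && ([set v; x'] \in P h)].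
  have term : forall x', x' != x -> \sum_(y : V) r x y * r x' y <=
      2 * (x' \in N) + ((x' \in N) && same x') * K' x.
    move=> x' x'x; case: (boolP (x' \in N)) => x'N; last first.
      by rewrite big1 // => y _; rewrite (rN x') // muln0.
    case: (boolP (same x')) => sm.
      rewrite /= mul1n; apply: leq_trans (leq_addl _ _); apply: leq_sum => y _.
      by rewrite /r; case: (rb _ _ _ _ _); case: (rb _ _ _ _ _).
    rewrite /= mul0n addn0 muln1.
    apply: leq_trans (claimB hC4 hv xN x'N sm).
    rewrite (eq_bigr (fun y => ((rb hE P v x y) && (rb hE P v x' y) : nat))); last first.
      by move=> y _; rewrite /r; case: (rb _ _ _ _ _); case: (rb _ _ _ _ _).
    rewrite sum_bool_card; apply: eq_leq; apply: eq_card => y.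
    rewrite /rb xN x'N /= inE [RHS]inE; by case: (y \in N1 _ _).
  apply: leq_trans (_ : K' x + \sum_(x' | x' != x) (2 * (x' \in N) + ((x' \in N) && same x') * K' x) <= _).
    by rewrite leq_add2l; apply: leq_sum => x' x'x; apply: term.
  rewrite big_split /= -big_distrr /= -big_distrl /=.
  have c1 : \sum_(x' | x' != x) ((x' \in N) : nat) = d - 1.
    rewrite big_mkcond /=.
    rewrite (eq_bigr (fun x' => ((x' != x) && (x' \in N) : nat))); last first.
      by move=> x' _; case: (x' != x).
    rewrite sum_bool_card /d (cardsD1 x N) xN add1n subn1 /=.
    by apply: eq_card => z; rewrite !inE.
  have c2 : \sum_(x' | x' != x) (((x' \in N) && same x') : nat) <= 1.
    apply: leq_trans (claimC hv xN).
    rewrite big_mkcond /=.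
    rewrite (eq_bigr (fun x' => ((x' \in N) && ((x' != x) && same x')) : nat)); last first.
      by move=> x' _; case: (x' != x); case: (x' \in N).
    by rewrite sum_bool_card; apply: eq_leq; apply: eq_card => z; rewrite !inE.
  rewrite c1.
  have : (\sum_(x' | x' != x) (((x' \in N) && same x') : nat)) * K' x <= K' x.
    by rewrite -{2}(mul1n (K' x)) leq_mul2r c2 orbT.
  lia.
apply: leq_trans; first by apply: leq_sum => x _; apply: step3.
have sK : \sum_(y : V) \sum_(x : V) r x y = \sum_(x : V) K' x by rewrite exchange_big.
rewrite sK.
rewrite (eq_bigr (fun x => 2 * K' x + (x \in N) * (2 * (d - 1)))); last first.
  move=> x _; case: (boolP (x \in N)) => xN; first by rewrite !mul1n.
  by rewrite mul0n /K' big1 // => y _; rewrite rN.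
rewrite big_split /= -big_distrr /= -big_distrl /=.
rewrite (sum_bool_card (fun x => x \in N)) (_ : #|[set y | y \in N]| = d); last by apply: eq_card => z; rewrite inE.
lia.
Qed.

Local Open Scope ring_scope.

Lemma final_real (R : realType) (g d : nat) : (g ^ 5 < d ^ 9)%N ->
  (g%:R : R) < (d%:R : R) `^ (9%:R / 5%:R).
Proof.
move=> H; rewrite ltNge; apply/negP => H2.
have H3 : ((d%:R : R) `^ (9%:R / 5%:R)) ^+ 5 <= (g%:R : R) ^+ 5.
  by rewrite lerXn2r // ?nnegrE ?powR_ge0.
rewrite -powR_mulrn ?powR_ge0 // -powRrM in H3.
have E9 : (9%:R / 5%:R * 5%:R : R) = 9%:R by field.
rewrite E9 in H3.
rewrite powR_mulrn // -!natrX ler_nat in H3.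
by move: H; rewrite ltnNge H3.
Qed.


Theorem lemma2 (V E : finType) (hE : E -> {set V}) (P : E -> {set {set V}})
    (v : V) (R : realType) :
  berge_C4_free hE -> valid_placement hE P ->
  (0 < #|N1 (Hedges P) v|)%N ->
  (#|Gaux'_edges (Hedges P) v|%:R : R) <
    (#|N1 (Hedges P) v|%:R : R) `^ (9%:R / 5%:R).
Proof.
move=> hC4 hv d0.
apply: final_real.
set N := N1 (Hedges P) v.
set K := fun y => \sum_(x : V) (rb hE P v x y : nat).
have K0 : forall y, y \notin N -> K y = 0%N.
  move=> y yN; apply: big1 => x _; by rewrite /rb (negbTE yN) andbF.
have JN : (\sum_(y : V) K y = \sum_(y in N) K y)%N.
  rewrite [RHS]big_mkcond /=; apply: eq_bigr => y _.
  by case: (boolP (y \in N)) => yN //; rewrite K0.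
have S2 : (\sum_(y in N) K y ^ 2 <= \sum_(y : V) K y ^ 2)%N.
  rewrite [X in (X <= _)%N]big_mkcond /=; apply: leq_sum => y _.
  by case: (y \in N).
have CS := nat_CS N K.
rewrite -JN in CS.
have c3 := @count3 V E hE P v hC4 hv.
have c1 := @count1 V E hE P v hC4 hv.
have c2 := @count2 V E hE P v.
apply: (@arith _ (\sum_(y : V) K y) #|N|) => //.
apply: leq_trans CS _.
rewrite leq_mul2l; apply/orP; right.
exact: leq_trans S2 c3.
Qed.
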